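(* Let $X_1=\mathbb{R}^6_{\ge0}$ with coordinates $x,y,z,u,v,w$, and let $G\le\mathrm{Sym}(6)$ be the group generated by the coordinate permutations $(u\ z)(v\ y)$ and $(w\ x)$; set $\mathbb{M}_{212}=X_1/G$ with quotient map $q$. Let $\mathbb{M}^{\mathrm{pl}}_{212}=q(\{(x,y,z,u,v,w)\in X_1: w\le x\le 2w\})\subset\mathbb{M}_{212}$. Then the link of $\mathbb{M}^{\mathrm{pl}}_{212}$, namely $q(\{w\le x\le 2w\}\cap\{x+y+z+u+v+w=1\})$, is contractible.
   Context: This is the cell of the moduli space of genus 3 tropical curves for the trivalent graph of type (212) (two loops attached by bridges to a pair of vertices joined by two parallel edges), with edge lengths $x,y,z,u,v,w$; $\mathbb{M}^{\mathrm{pl}}_{212}$ is the locus of such metric graphs arising (in the closure of smooth curves) as tropical plane quartics. *)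

(* Defs.v *)
From HB Require Import structures.
From mathcomp Require Import all_boot all_order all_algebra all_fingroup.
From mathcomp Require Import generic_quotient.
From mathcomp Require Import all_classical all_reals all_analysis.

Unset Printing Implicit Defensive.

Import Order.TTheory GRing.Theory Num.Theory.
Import numFieldNormedType.Exports.
Local Open Scope ring_scope.

Definition cx : 'I_6 := inord 0.
Definition cy : 'I_6 := inord 1.
Definition cz : 'I_6 := inord 2.
Definition cu : 'I_6 := inord 3.
Definition cv : 'I_6 := inord 4.
Definition cw : 'I_6 := inord 5.

Definition perm_uz_vy : {perm 'I_6} := (tperm cu cz * tperm cv cy)%g.
Definition perm_wx : {perm 'I_6} := tperm cw cx.
Definition G212 : {group {perm 'I_6}} := <<[set perm_uz_vy; perm_wx]>>%G.

Local Open Scope classical_set_scope.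

Definition orbrel (R : realType) (a b : 'rV[R]_6) : bool :=
  [exists s in G212, b == col_perm s a].

Lemma orbrel_refl (R : realType) : reflexive (@orbrel R).
Proof.
move=> a; apply/existsP; exists 1%g; rewrite group1 /=.
by apply/eqP; rewrite col_perm1.
Qed.

Lemma orbrel_sym (R : realType) : symmetric (@orbrel R).
Proof.
suff H : forall a b : 'rV[R]_6, orbrel R a b -> orbrel R b a.
  by move=> a b; apply/idP/idP; apply: H.
move=> a b /existsP [s /andP [sG /eqP ->]]; apply/existsP; exists s^-1%g.
rewrite groupV sG /=; apply/eqP; rewrite -col_permM mulVg col_perm1 //.
Qed.

Lemma orbrel_trans (R : realType) : transitive (@orbrel R).
Proof.
move=> b a c /existsP [s /andP [sG /eqP ->]] /existsP [t /andP [tG /eqP ->]].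
apply/existsP; exists (t * s)%g; rewrite groupM //=.
by apply/eqP; rewrite col_permM.
Qed.

Canonical orbrel_equiv (R : realType) : equiv_rel 'rV[R]_6 :=
  EquivRel (@orbrel R) (@orbrel_refl R) (@orbrel_sym R) (@orbrel_trans R).

Local Open Scope quotient_scope.
Notation quot212 R := (quotient_topology {eq_quot (orbrel_equiv R)}).

Definition q212 (R : realType) : 'rV[R]_6 -> quot212 R :=
  fun a => \pi_({eq_quot (orbrel_equiv R)}) a.

Definition X1 (R : realType) : set 'rV[R]_6 := [set a | forall i, 0 <= a ord0 i].

Definition pl_cone (R : realType) : set 'rV[R]_6 :=
  [set a | X1 R a /\ a ord0 cw <= a ord0 cx /\ a ord0 cx <= 2 * a ord0 cw].

Definition simplex6 (R : realType) : set 'rV[R]_6 :=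
  [set a | \sum_(i < 6) a ord0 i = 1].

Definition link_pl212 (R : realType) : set (quot212 R) :=
  q212 R @` (pl_cone R `&` simplex6 R).

Definition contractible (R : realType) {T : topologicalType} (A : set T) : Prop :=
  exists2 x0 : T, A x0 &
  exists H : T * R -> T,
    [/\ {within A `*` `[0%R, 1%R], continuous H},
        (forall a t, A a -> `[0%R, 1%R] t -> A (H (a, t))),
        (forall a, A a -> H (a, 0%R) = a) &
        (forall a, A a -> H (a, 1%R) = x0)].

(* Main.v *)
Require Import Defs.
From HB Require Import structures.
From mathcomp Require Import all_boot all_order all_algebra all_fingroup.
From mathcomp Require Import generic_quotient.
From mathcomp Require Import all_classical all_reals all_analysis.
Import numFieldNormedType.Exports.
Import Order.TTheory GRing.Theory Num.Theory.
Local Open Scope ring_scope.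
Local Open Scope classical_set_scope.
Local Open Scope quotient_scope.

Section S.
Variable R : realType.

Lemma colperm_cont (s : {perm 'I_6}) :
  continuous (fun b : 'rV[R]_6 => col_perm s b).
Proof.
move=> x; apply/(cvg_ballP (FF:=nbhs_filter x)) => e e0.
have : \forall y \near x, ball x e y by exact: nbhsx_ballx.
apply: filterS => y [_ H]; split => // i j; rewrite !mxE; exact: H.
Qed.

Lemma q_eq (a b : 'rV[R]_6) : q212 R a = q212 R b <-> orbrel R a b.
Proof.
rewrite /q212; split => H.
  exact/eqmodP.
exact/eqmodP.
Qed.

Definition cc : 'rV[R]_6 := const_mx (6%:R^-1).
Definition hh (b : 'rV[R]_6) (t : R) : 'rV[R]_6 := (1 - t) *: b + t *: cc.

Lemma hh_equiv a b t : orbrel R a b -> orbrel R (hh a t) (hh b t).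
Proof.
move=> /existsP [s /andP [sG /eqP ->]]; apply/existsP; exists s; rewrite sG /=.
by apply/eqP/matrixP => i j; rewrite !mxE.
Qed.

Lemma hc : continuous (fun z : 'rV[R]_6 * R => hh z.1 z.2).
Proof.
move=> z.
apply: (@continuousD _ _ _ (fun z : 'rV[R]_6 * R => (1 - z.2) *: z.1) (fun z => z.2 *: cc)).
  apply: continuousZ.
    apply: (@continuousB _ R^o _ (fun=> 1) (fun z => z.2)); first exact: cvg_cst.
    exact: cvg_snd.
  exact: cvg_fst.
apply: continuousZ.
  exact: cvg_snd.
exact: cvg_cst.
Qed.


Lemma qrepr (p : quot212 R) : q212 R (repr p) = p.
Proof. exact: reprK. Qed.

Lemma sat_open (P : set 'rV[R]_6) : open P -> open ((q212 R) @^-1` (q212 R @` P)).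
Proof.
move=> oP; rewrite openE => b [b' Pb' /q_eq /existsP [s /andP [sG /eqP bE]]].
have : nbhs b ((fun y => col_perm s^-1 y) @^-1` P).
  apply: (colperm_cont s^-1 b); rewrite /= bE -col_permM mulVg col_perm1.
  exact: open_nbhs_nbhs.
apply: filterS => y Py; exists (col_perm s^-1 y) => //.
apply/q_eq/existsP; exists s; rewrite sG /=.
by rewrite -col_permM mulgV col_perm1.
Qed.

Definition HH (z : quot212 R * R) : quot212 R := q212 R (hh (repr z.1) z.2).

Lemma HH_cont : continuous HH.
Proof.
move=> [p t] V /= nV.
have [V' [oV' V'H] V'V] : exists2 B, open_nbhs (HH (p,t)) B & B `<=` V.
  by move: nV; rewrite (@nbhsE (quot212 R)).
set a := repr p.
have nh : nbhs (a,t) ((fun z => hh z.1 z.2) @^-1` (q212 R @^-1` V')).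
  have oh : open (q212 R @^-1` V') := oV'.
  have := @open_nbhs_nbhs _ (hh a t) _ (conj oh V'H).
  move=> HN. apply: hc. exact: HN.
case: nh => -[P Q] /= [nP nQ] sPQ.
move: nP; rewrite nbhsE => -[P' [oP' aP'] P'P].
exists (q212 R @` P', Q) => /=.
  split => //; apply: (@open_nbhs_nbhs (quot212 R)); split; first exact: sat_open.
  by exists a => //; exact: qrepr.
move=> [p' t'] [/= [b P'b <-] Qt']; apply: V'V; rewrite /HH /=.
have -> : q212 R (hh (repr (q212 R b)) t') = q212 R (hh b t').
  by apply/q_eq/hh_equiv/q_eq; exact: qrepr.
exact: (sPQ (b,t') (conj (P'P b P'b) Qt')).
Qed.


Lemma hh0 b : hh b 0 = b.
Proof. by rewrite /hh subr0 scale1r scale0r addr0. Qed.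

Lemma hh1 b : hh b 1 = cc.
Proof. by rewrite /hh subrr scale0r scale1r add0r. Qed.

Lemma sixK : (6%:R^-1 : R) *+ 6 = 1.
Proof. by rewrite -(mulr_natl (6%:R^-1)) mulfV // pnatr_eq0. Qed.

Lemma S_cc : (pl_cone R `&` simplex6 R) cc.
Proof.
have h6 : (0 : R) < 6%:R^-1 by rewrite invr_gt0.
split; first split.
- by move=> i; rewrite mxE ltW.
- rewrite !mxE; split => //; rewrite ler_pMl // ler1n //.
rewrite /simplex6 /=.
under eq_bigr do rewrite mxE.
by rewrite sumr_const card_ord sixK.
Qed.

Lemma S_hh a t : (pl_cone R `&` simplex6 R) a -> 0 <= t <= 1 ->
  (pl_cone R `&` simplex6 R) (hh a t).
Proof.
move=> [[X [Hwx Hx2]] Hs] /andP [t0 t1].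
have h6 : (0 : R) < 6%:R^-1 by rewrite invr_gt0.
have t1' : 0 <= 1 - t by rewrite subr_ge0.
have E i : hh a t ord0 i = (1 - t) * a ord0 i + t * 6%:R^-1 by rewrite !mxE.
split; first split.
- move=> i; rewrite E; apply: addr_ge0; apply: mulr_ge0 => //; first [exact: X | exact: ltW].
- rewrite !E; split.
    by rewrite lerD2r; apply: ler_wpM2l.
  have H1 : (1 - t) * a ord0 cx <= 2 * ((1 - t) * a ord0 cw).
    by rewrite mulrCA; apply: ler_wpM2l.
  have H2 : 0 <= t * 6%:R^-1 by apply: mulr_ge0 => //; exact: ltW.
  rewrite mulrDr; apply: lerD => //.
  by rewrite -[leLHS]mul1r ler_wpM2r // ler1n.
rewrite /simplex6 /=.
under eq_bigr do rewrite E.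
rewrite big_split /= -mulr_sumr Hs mulr1 sumr_const card_ord -mulrnAr sixK.
by rewrite mulr1 subrK.
Qed.

End S.

Theorem mainTheorem6 (R : realType) : contractible R (link_pl212 R).
Proof.
exists (q212 R (cc R)); first by exists (cc R) => //; exact: S_cc.
exists (@HH R); split.
- apply: continuous_subspaceT; exact: HH_cont.
- move=> p t [a Sa <-] /=; rewrite in_itv /= => tI.
  exists (hh R a t); first exact: S_hh.
  rewrite /HH /=; apply/q_eq/hh_equiv/q_eq.
  by rewrite qrepr.
- by move=> p _; rewrite /HH /= hh0 qrepr.
- by move=> p _; rewrite /HH /= hh1.
Qed.
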